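(* Let $h,v$ be permutations of $\Lambda=\{1,\dots,d\}$ such that $\langle h,v\rangle$ acts transitively on $\Lambda$, let $M\ge0$ be an integer, and let $(\sigma_n)_{n\in\mathbb{Z}}$ be a Sturmian sequence in $\Sigma=\{L,R\}$. Then every sequence $(\mu_n,\sigma_n)_{n\in\mathbb{Z}}\in(\Lambda\times\Sigma)^{\mathbb{Z}}$ satisfying $\mu_{n+1}=\sigma_n\cdot\mu_n$ for all $n$ contains every element of $\Lambda\times\Sigma$.
   Context: Here $L\cdot\lambda=vh^M(\lambda)$ and $R\cdot\lambda=vh^{M+1}(\lambda)$. A Sturmian sequence is a biinfinite sequence over two letters that is not eventually periodic and has exactly $n+1$ distinct subwords of each length $n$. *)

(* Defs.v *)
From mathcomp Require Import all_boot all_order all_algebra all_fingroup.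
Set Implicit Arguments. Unset Strict Implicit. Unset Printing Implicit Defensive.
Import GRing.Theory Num.Theory.

Notation SigL := false.
Notation SigR := true.

(* Lambda = {1,...,d} is encoded as 'I_d. *)
Definition sact (d : nat) (h v : {perm 'I_d}) (M : nat) (s : bool) (x : 'I_d) : 'I_d :=
  if s then v ((h ^+ M.+1)%g x) else v ((h ^+ M)%g x).

Definition is_factor (s : int -> bool) (w : seq bool) : Prop :=
  exists k : int, forall i : nat, (i < size w)%N -> nth false w i = s (k + i%:Z)%R.

Definition num_factors_eq (s : int -> bool) (n c : nat) : Prop :=
  exists ws : seq (seq bool),
    [/\ uniq ws, size ws = c, all (fun w => size w == n) ws &
        forall w, size w = n -> (is_factor s w <-> w \in ws)].

Definition eventually_periodic (s : int -> bool) : Prop :=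
  exists (p : nat) (N : int), (0 < p)%N /\
    ((forall n : int, (N <= n)%R -> s (n + p%:Z)%R = s n) \/
     (forall n : int, (n <= N)%R -> s (n - p%:Z)%R = s n)).

Definition sturmian (s : int -> bool) : Prop :=
  ~ eventually_periodic s /\ forall n : nat, num_factors_eq s n n.+1.

(* Main.v *)
Require Import Defs.
From mathcomp Require Import all_boot all_order all_algebra all_fingroup.
From mathcomp Require Import zify.
From Stdlib Require Import Classical ClassicalEpsilon.
Set Implicit Arguments. Unset Strict Implicit. Unset Printing Implicit Defensive.

Section Words.
Implicit Types (F : seq bool -> Prop) (u v w x y z : seq bool) (a b c : bool).

Lemma neq_negb (a c : bool) : a != c -> a = ~~ c. Proof. by case: a c => [] []. Qed.

Definition RS F u := F (rcons u false) /\ F (rcons u true).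

Record langC F : Prop := LangC {
  C_fact : forall u v, F (u ++ v) -> F u /\ F v;
  C_extr : forall u, F u -> exists a, F (rcons u a);
  C_extl : forall u, F u -> exists a, F (a :: u);
  C_rsuniq : forall u v, RS F u -> RS F v -> size u = size v -> u = v;
  C_rsex : forall n, exists u, size u = n /\ RS F u;
  C_rec : forall u, F u -> exists x, x <> [::] /\ F (x ++ u) /\ exists s, x ++ u = u ++ s }.

Section Basic.
Variable F : seq bool -> Prop.
Hypothesis hF : langC F.

Lemma factL u v : F (u ++ v) -> F u. Proof. by move/(C_fact hF)=> []. Qed.
Lemma factR u v : F (u ++ v) -> F v. Proof. by move/(C_fact hF)=> []. Qed.
Lemma F_cons a u : F (a :: u) -> F u. Proof. exact: (@factR [:: a]). Qed.
Lemma F_rcons a u : F (rcons u a) -> F u. Proof. by rewrite -cats1; apply: factL. Qed.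

Lemma RS_c c y : RS F y <-> F (rcons y c) /\ F (rcons y (~~ c)).
Proof. by case: c; rewrite /RS; tauto. Qed.

Lemma F_letter a : F [:: a].
Proof. have [u [/size0nil -> [H0 H1]]] := C_rsex hF 0. by case: a. Qed.

Lemma RS_drop k u : RS F u -> RS F (drop k u).
Proof.
rewrite /RS -{1 2}(cat_take_drop k u) !rcons_cat => -[H1 H2].
by split; apply: factR H1 || apply: factR H2.
Qed.

Lemma RS_pre y y' : RS F y -> RS F y' -> size y <= size y' -> exists p, y' = p ++ y.
Proof.
move=> Hy Hy' le; exists (take (size y' - size y) y').
have E := C_rsuniq hF Hy (RS_drop (size y' - size y) Hy').
rewrite {2}E ?cat_take_drop // size_drop; lia.
Qed.

Variable c : bool.
Hypothesis nc : ~ F [:: ~~ c; ~~ c].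

Lemma followed u : F (rcons u (~~ c)) -> F (rcons (rcons u (~~ c)) c).
Proof.
move=> H; have [a Ha] := C_extr hF H.
case: (eqVneq a c) => [E|ne]; first by rewrite E in Ha.
exfalso; apply: nc.
have ea := neq_negb ne.
move: Ha; rewrite ea -!cats1 -catA /=; exact: factR.
Qed.

Lemma preceded u : F (~~ c :: u) -> F (c :: ~~ c :: u).
Proof.
move=> H; have [a Ha] := C_extl hF H.
case: (eqVneq a c) => [E|ne]; first by rewrite E in Ha.
exfalso; apply: nc.
have ea := neq_negb ne.
move: Ha; rewrite ea -[_ :: _ :: u]/([:: ~~c; ~~c] ++ u); exact: factL.
Qed.

Lemma RS1 : RS F [:: c].
Proof.
have [u [Hs Ha]] := C_rsex hF 1.
case: u Hs Ha => [|a [|//]] // _ Ha.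
case: (eqVneq a c) => [E|ne]; first by rewrite -E.
have ea := neq_negb ne.
by exfalso; apply: nc; move: Ha; rewrite ea => /(RS_c (~~ c)) [].
Qed.

End Basic.

Lemma sq F : langC F -> exists c, F [:: c; c] /\ ~ F [:: ~~ c; ~~ c].
Proof.
move=> hF.
have [u [Hs Hc]] := C_rsex hF 1.
case: u Hs Hc => [|c [|//]] // _ Hc.
have [Hcc Hcn] := (RS_c F c [:: c]).1 Hc.
exists c; split => // Hnn.
have [Hnc|Hnc] := classic (F [:: ~~ c; c]).
  have : RS F [:: ~~ c] by apply/(RS_c F c).
  move/(C_rsuniq hF Hc)=> /(_ erefl) [] /eqP; by case: c {Hc Hcc Hcn Hnn Hnc}.
have allc : forall z, F (~~ c :: z) -> c \notin z.
  elim=> [//|b z IH] H.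
  have Hb : F [:: ~~ c; b] by apply: (@factL F hF [:: ~~c; b] z).
  have eb : b = ~~ c.
    apply: neq_negb; apply/eqP=> eb; apply: Hnc; by rewrite eb in Hb.
  rewrite inE negb_or IH; last by move: H; rewrite eb => /(F_cons hF).
  by rewrite eb; case: c {Hc Hcc Hcn Hnn Hnc IH H eb Hb}.
have [x [xn [Fx [s Es]]]] := C_rec hF Hcn.
case: x xn Fx Es => [//|a x] _ Fx [ea Es].
have Fx' : F (x ++ [:: c; ~~ c]) by apply: F_cons Fx.
rewrite Es in Fx'; have := allc _ Fx'.
case: x Es {Fx Fx'} => [|b x] /=.
  by case=> /eqP; case: c {Hc Hcc Hcn Hnn Hnc allc ea}.
by case=> _ <-; rewrite mem_cat inE eqxx orbT.
Qed.

End Words.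

Section Tau.
Implicit Types (F : seq bool -> Prop) (u v w x y z : seq bool) (a b c : bool).

Fixpoint tau c u := match u with
  | [::] => [::]
  | a :: r => if a == c then c :: tau c r else c :: ~~ c :: tau c r end.

Lemma tau_cat c u v : tau c (u ++ v) = tau c u ++ tau c v.
Proof. by elim: u => //= a u ->; case: (a == c). Qed.

Lemma tau_head c u : tau c u = [::] \/ exists t, tau c u = c :: t.
Proof. case: u => [|a u] /=; [by left|right]; by case: (a == c); eexists. Qed.

Lemma tau_c c r u : exists t, tau c u ++ c :: r = c :: t.
Proof. by case: (tau_head c u) => [->|[t ->]]; eexists. Qed.

Lemma tau_nil c u : tau c u = [::] -> u = [::].
Proof. by case: u => //= a u; case: (a == c). Qed.

Lemma tau_nseq c k : tau c (nseq k c) = nseq k c.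
Proof. by elim: k => //= k ->; rewrite eqxx. Qed.

Lemma tau1c c : tau c [:: c] = [:: c]. Proof. by rewrite /= eqxx. Qed.
Lemma tau1n c : tau c [:: ~~ c] = [:: c; ~~ c].
Proof. by case: c. Qed.

Lemma size_tau c u : size (tau c u) = size u + count_mem (~~ c) u.
Proof.
elim: u => //= a u IH; case: (eqVneq a c) => [->|ne] /=.
  by rewrite ?eqxx /= IH; case: c {IH} => /=; lia.
rewrite ?(negbTE ne) /= IH (neq_negb ne) ?eqxx; lia.
Qed.

Lemma count_tau c u : count_mem (~~ c) (tau c u) = count_mem (~~ c) u.
Proof.
elim: u => //= a u IH; case: (eqVneq a c) => [->|ne] /=.
  by rewrite ?eqxx /= IH; case: c {IH}.
by rewrite ?(negbTE ne) /= IH (neq_negb ne) ?eqxx; case: c {IH ne}.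
Qed.

Fixpoint dec c z := match z with
  | [::] => [::]
  | a :: r => if a == c then
      match r with
      | b :: r' => if b == c then c :: dec c r else ~~ c :: dec c r'
      | [::] => [:: c] end
    else dec c r end.

Lemma negc_eq c : (~~ c == c) = false. Proof. by case: c. Qed.
Lemma dec_cc c t : dec c (c :: c :: t) = c :: dec c (c :: t).
Proof. by rewrite /= eqxx. Qed.
Lemma dec_cn c t : dec c (c :: ~~ c :: t) = ~~ c :: dec c t.
Proof. by rewrite /= eqxx negc_eq. Qed.

Lemma dec_tau c u r : dec c (tau c u ++ c :: r) = u ++ dec c (c :: r).
Proof.
elim: u => [//|a u IH]; case: (eqVneq a c) => [->|ne].
  rewrite /tau -/tau eqxx cat_cons.
  by have [t Ht] := tau_c c r u; rewrite Ht dec_cc -Ht IH.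
by rewrite (neq_negb ne) /tau -/tau negc_eq !cat_cons dec_cn IH.
Qed.

Lemma dec1 c : dec c [:: c] = [:: c]. Proof. by rewrite /= eqxx. Qed.

Lemma tau_inj c u v : tau c u = tau c v -> u = v.
Proof.
move=> E; have := dec_tau c u [::]; rewrite E dec_tau dec1 !cats1.
by move/rcons_inj => [].
Qed.

Lemma tau_suffix c u v p : p ++ tau c u = tau c v -> exists q, v = q ++ u.
Proof.
elim: v p => [|b v IH] p /=.
  by case: p => [|? ?] //= /tau_nil ->; exists [::].
case: p => [|p0 p] /=.
  by move=> E; exists [::]; apply: (@tau_inj c); rewrite E.
case: (b == c) => -[_ E].
  by have [q ->] := IH _ E; exists (b :: q).
case: p E => [|p1 p] /= E.
  by case: (tau_head c u) E => [->|[t ->]] // [] /eqP; case: c {IH}.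
by case: E => _ /IH [q ->]; exists (b :: q).
Qed.

Section Parse.
Variable F : seq bool -> Prop.
Hypothesis hF : langC F.
Variable c : bool.
Hypothesis nc : ~ F [:: ~~ c; ~~ c].

Lemma tparse z : F (c :: z) -> exists u, c :: z = tau c u.
Proof.
elim: {z} (size z) {-2}z (leqnn (size z)) => [|n IH] [|b z] //=.
  move=> _ _; exists [:: c]; by rewrite tau1c.
  move=> _ _; exists [:: c]; by rewrite tau1c.
move=> sz Hz; case: (eqVneq b c) => [eb|ne].
  rewrite eb in Hz *; have [u Hu] := IH z sz (F_cons hF Hz).
  by exists (c :: u); rewrite /= eqxx -Hu.
rewrite (neq_negb ne) in Hz *.
case: z sz Hz => [|b' z] sz Hz.
  by exists [:: ~~ c]; rewrite tau1n.
have eb' : b' = c.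
  case: (eqVneq b' c) => // ne'; exfalso; apply: nc.
  rewrite (neq_negb ne') in Hz; apply: (@factL F hF _ z).
  exact: (F_cons hF Hz).
rewrite eb' in Hz *.
have [u Hu] := IH z (ltnW sz) (F_cons hF (F_cons hF Hz)).
by exists (~~ c :: u); rewrite /tau -/tau negc_eq -Hu.
Qed.

End Parse.
End Tau.

Definition desub (c : bool) (F : seq bool -> Prop) (u : seq bool) := F (tau c u ++ [:: c]).

Section Desub.
Variable F : seq bool -> Prop.
Hypothesis hF : langC F.
Variable c : bool.
Hypothesis nc : ~ F [:: ~~ c; ~~ c].

Lemma rcons_cc u : tau c (rcons u c) ++ [:: c] = tau c u ++ [:: c; c].
Proof. by rewrite -cats1 tau_cat tau1c -catA. Qed.
Lemma rcons_cn u : tau c (rcons u (~~ c)) ++ [:: c] = tau c u ++ [:: c; ~~ c; c].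
Proof. by rewrite -cats1 tau_cat tau1n -catA. Qed.

Lemma RS'_RS u : RS (desub c F) u -> RS F (tau c u ++ [:: c]).
Proof.
move/(RS_c _ c) => [H1 H2]; apply/(RS_c F c); split.
  by move: H1; rewrite /desub rcons_cc -cats1 -catA.
move: H2; rewrite /desub rcons_cn -cats1 -catA /= => H2.
by apply: (@factL F hF _ [:: c]); rewrite -catA.
Qed.

Lemma RS_RS' u : RS F (tau c u ++ [:: c]) -> RS (desub c F) u.
Proof.
move/(RS_c _ c) => [H1 H2]; apply/(RS_c _ c); split.
  by rewrite /desub rcons_cc; move: H1; rewrite -cats1 -catA.
rewrite /desub rcons_cn; have := followed hF nc H2.
by rewrite -!cats1 -!catA.
Qed.

Lemma langC_desub : langC (desub c F).
Proof.
split.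
- move=> u v; rewrite /desub tau_cat -catA => H; split; last exact: factR H.
  have [t Ht] := tau_c c [::] v; rewrite Ht in H.
  by apply: (@factL F hF _ t); rewrite -catA.
- move=> u H; have [a Ha] := C_extr hF H.
  case: (eqVneq a c) => [E|ne].
    by exists c; rewrite /desub rcons_cc; move: Ha; rewrite E -cats1 -catA.
  exists (~~ c); rewrite /desub rcons_cn.
  rewrite (neq_negb ne) in Ha; have := followed hF nc Ha.
  by rewrite -!cats1 -!catA.
- move=> u H; have [a Ha] := C_extl hF H.
  case: (eqVneq a c) => [E|ne].
    by exists c; rewrite /desub /= eqxx; rewrite E in Ha.
  exists (~~ c); rewrite /desub /tau -/tau negc_eq /=.
  rewrite (neq_negb ne) in Ha; by have := preceded hF nc Ha.
- have key : forall u v, RS (desub c F) u -> RS (desub c F) v ->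
      size (tau c u ++ [:: c]) <= size (tau c v ++ [:: c]) -> exists q, v = q ++ u.
    move=> u v Hu Hv le.
    have [p Ep] := RS_pre hF (RS'_RS Hu) (RS'_RS Hv) le.
    have Ep2 : tau c v = p ++ tau c u by apply: (@rcons_injl _ c); rewrite -!cats1 -catA.
    exact: tau_suffix (esym Ep2).
  move=> u v Hu Hv Hs.
  case: (leqP (size (tau c u ++ [:: c])) (size (tau c v ++ [:: c]))) => le.
    have [q Eq] := key u v Hu Hv le.
    have : size q = 0 by move: Hs; rewrite Eq size_cat; lia.
    by move/size0nil => q0; rewrite Eq q0.
  have [q Eq] := key v u Hv Hu (ltnW le).
  have : size q = 0 by move: Hs; rewrite Eq size_cat; lia.
  by move/size0nil => q0; rewrite Eq q0.
- have strong : forall n, exists u, size u = n /\ RS F (tau c u ++ [:: c]).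
    elim=> [|n [u [su Hu]]]; first by exists [::]; split => //=; have := RS1 hF nc.
    set y := tau c u ++ [:: c] in Hu.
    have [z [sz Hz]] := C_rsex hF (size y).+2.
    have [p Ep] := RS_pre hF Hu Hz (ltac:(rewrite sz; lia)).
    have sp : size p = 2 by move: sz; rewrite Ep size_cat; lia.
    case: p sp Ep => [|a [|b [|//]]] // _ Ep.
    case: (eqVneq b c) => [eb|ne].
      exists (c :: u); split; first by rewrite /= su.
      have := RS_drop hF 1 Hz; rewrite Ep eb /=.
      by rewrite /tau -/tau eqxx.
    have ea : a = c.
      case: (eqVneq a c) => // ne'; exfalso; apply: nc.
      have Fz : F z by case: Hz => /(F_rcons hF).
      move: Fz; rewrite Ep (neq_negb ne) (neq_negb ne') /=.
      by move/(@factL F hF [:: ~~c; ~~c]).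
    exists (~~ c :: u); split; first by rewrite /= su.
    by move: Hz; rewrite Ep ea (neq_negb ne) /tau -/tau negc_eq.
  move=> n; have [u [su Hu]] := strong n; exists u; split => //; exact: RS_RS'.
- move=> u H; have [x [xn [Fx [s Es]]]] := C_rec hF H.
  case: x xn Fx Es => [//|a x'] _ Fx Es.
  have ea : a = c.
    have [t Ht] := tau_c c [::] u.
    by move: Es; rewrite Ht /= => -[].
  rewrite ea in Fx Es.
  have Fc : F (c :: x') by apply: (@factL F hF _ (tau c u ++ [:: c])).
  have [x'' Ex] := tparse hF nc Fc.
  rewrite Ex in Fx Es.
  exists x''; split; first by move=> E; move: Ex; rewrite E.
  split; first by rewrite /desub tau_cat -catA.
  set z := x'' ++ u.
  have E1 : tau c z ++ [:: c] = tau c u ++ c :: s by rewrite tau_cat -catA Es -catA.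
  have := congr1 (dec c) E1; rewrite !dec_tau dec1 => E2.
  exists (take (size z - size u) (dec c (c :: s))).
  have := congr1 (take (size z)) E2.
  rewrite take_size_cat // take_cat.
  have -> : (size z < size u) = false by rewrite /z size_cat; apply/negbTE; rewrite -leqNgt leq_addl.
  done.
Qed.

End Desub.

Section Gen.
Variable gT : finGroupType.
Local Open Scope group_scope.
Implicit Types (F : seq bool -> Prop) (u v w x y z : seq bool) (a b c : bool).

Definition ev (fL fR : gT) x : gT :=
  foldr (fun a g => ((if a then fR else fL) * g)%g) 1%g x.
Definition Dw F w x := x <> [::] /\ F (x ++ w) /\ exists s, x ++ w = w ++ s.
Definition Gen F w := forall (fL fR : gT) (H : {group gT}),
  (forall x, Dw F w x -> ev fL fR x \in H) -> fL \in H /\ fR \in H.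

Lemma ev_cat fL fR x y : ev fL fR (x ++ y) = (ev fL fR x * ev fL fR y)%g.
Proof. by elim: x => /= [|a x ->]; rewrite ?mul1g ?mulgA. Qed.

Lemma Gen_nil F : langC F -> Gen F [::].
Proof.
move=> hF fL fR H hyp.
have D a : Dw F [::] [:: a].
  by split => //; split; [rewrite cats0; exact: F_letter|exists [:: a]].
by move: (hyp _ (D false)) (hyp _ (D true)); rewrite /= !mulg1.
Qed.

Lemma Gen_rcons F w a : langC F -> Gen F (rcons w a) -> Gen F w.
Proof.
move=> hF G fL fR H hyp; apply: G => x [xn [Fx [s Es]]]; apply: hyp.
split => //; split; first by move: Fx; rewrite -cats1 catA; exact: factL.
exists (take (size x) (a :: s)).
have := congr1 (take (size (x ++ w))) Es.
rewrite -cats1 catA take_size_cat // cats1 cat_rcons take_cat.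
have -> : (size (x ++ w) < size w) = false.
  by rewrite size_cat; apply/negbTE; rewrite -leqNgt leq_addl.
by rewrite size_cat addnK.
Qed.

Lemma Gen_cons F w a : langC F -> Gen F (a :: w) -> Gen F w.
Proof.
move=> hF G fL fR H hyp.
set g := if a then fR else fL.
have [hL hR] : fL \in H :^ g^-1 /\ fR \in H :^ g^-1.
  apply: (G fL fR (H :^ g^-1)%G) => x [xn [Fx [s Es]]].
  case: x xn Fx Es => [//|b y] _ Fx [eb Es]; subst b.
  have Dy : Dw F w (rcons y a).
    split; first by case: y {Fx Es}.
    split; first by rewrite cat_rcons; exact: F_cons Fx.
    by exists s; rewrite cat_rcons.
  move: (hyp _ Dy); rewrite -cats1 ev_cat /= mulg1 -/g => hy.
  by rewrite mem_conjg invgK conjgE /= -/g -(mulgA g) mulKg.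
have gH : g \in H.
  have : g \in H :^ g^-1 by move: hL hR; rewrite /g; case: (a).
  by rewrite mem_conjg invgK conjgE mulKg.
by move: hL hR; rewrite !mem_conjg !invgK !groupJr.
Qed.

Lemma Gen_tau F c w' : Gen (desub c F) w' -> Gen F (tau c w' ++ [:: c]).
Proof.
move=> G fL fR H hyp.
pose f' b := ev fL fR (tau c [:: b]).
have evt x : ev (f' false) (f' true) x = ev fL fR (tau c x).
  elim: x => //= b x ->.
  have -> : (if b then f' true else f' false) = f' b by case: b.
  by rewrite /f' -ev_cat -tau_cat.
have [h0 h1] : f' false \in H /\ f' true \in H.
  apply: G => x [xn [Fx [s Es]]]; rewrite evt; apply: hyp.
  split; first by case: x xn {Fx Es} => //= b x _; case: (b == c).
  split; first by move: Fx; rewrite /desub tau_cat -catA.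
  have [t Ht] := tau_c c [::] s.
  exists t; rewrite catA -tau_cat Es tau_cat -catA Ht.
  by rewrite -catA.
move: h0 h1; rewrite /f'; case: c {hyp G f' evt} => /= ; rewrite !mulg1.
  by move=> h0 h1; rewrite groupMl in h0.
by move=> h0 h1; rewrite groupMl in h1.
Qed.

Lemma Gen_base F c : langC F -> F [:: c; c] -> ~ F [:: ~~ c; ~~ c] -> Gen F [:: c].
Proof.
move=> hF Hcc nc fL fR H hyp.
have h1 : ev fL fR [:: c] \in H.
  by apply: hyp; split => //; split => //; exists [:: c].
have h2 : ev fL fR [:: c; ~~ c] \in H.
  apply: hyp; split => //; split; last by exists [:: ~~ c; c].
  have := (RS_c F c _).1 (RS1 hF nc) => -[_ H2].
  by have := followed hF nc H2.
move: h1 h2; case: c {Hcc nc hyp} => /=; rewrite !mulg1 => h1.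
  by rewrite groupMl.
by rewrite groupMl.
Qed.

End Gen.

Lemma nseqSr (c : bool) k : nseq k.+1 c = rcons (nseq k c) c.
Proof. by elim: k => //= k ->. Qed.

Lemma negc_count (c : bool) : (c == ~~ c) = false. Proof. by case: c. Qed.

Section GenAll.
Variable gT : finGroupType.
Implicit Types (F : seq bool -> Prop) (u v w x y z : seq bool) (a b c : bool).

Lemma Gen_iso k : forall F c, langC F -> ~ F [:: ~~ c; ~~ c] ->
  F (~~ c :: rcons (nseq k c) (~~ c)) -> Gen gT F [:: ~~ c].
Proof.
elim: k => [|k IH] F c hF nc Hk; first by exfalso; apply: nc.
have hF' := langC_desub hF nc.
have G' : Gen gT (desub c F) [:: ~~ c].
  have [e [Hee ne]] := sq hF'.
  case: (eqVneq e c) => [E|ne'].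
    rewrite E in Hee ne; apply: (IH _ _ hF' ne).
    have H1 := preceded hF nc Hk.
    have H2 := followed hF nc (u := c :: ~~ c :: nseq k.+1 c) H1.
    rewrite /desub.
    have -> : tau c (~~ c :: rcons (nseq k c) (~~ c)) ++ [:: c] =
              rcons (rcons (c :: ~~ c :: nseq k.+1 c) (~~ c)) c.
      rewrite /tau -/tau negc_eq -cats1 tau_cat tau_nseq tau1n nseqSr.
      by rewrite -!cats1 /= -!catA.
    exact: H2.
  rewrite (neq_negb ne') in Hee ne.
  exact: (Gen_base (gT:=gT) hF' Hee ne).
have G1 := Gen_tau G'.
rewrite tau1n /= in G1.
have G2 : Gen gT F [:: c; ~~ c] by apply: (Gen_rcons (a := c)) hF _.
exact: Gen_cons hF G2.
Qed.

Lemma iso_k F c : langC F -> F [:: ~~ c] -> exists k, F (~~ c :: rcons (nseq k c) (~~ c)).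
Proof.
move=> hF H.
have [x [xn [Fx [s Es]]]] := C_rec hF H.
case: x xn Fx Es => [//|b y] _ Fx [eb _]; subst b.
have gen : forall y j, F (~~ c :: nseq j c ++ y ++ [:: ~~ c]) ->
    exists k, F (~~ c :: rcons (nseq k c) (~~ c)).
  elim=> [|b y' IH] j Hj.
    by exists j; rewrite -cats1.
  case: (eqVneq b c) => [eb|ne].
    apply: (IH j.+1); move: Hj; rewrite eb nseqSr -cats1 -!catA /=.
    done.
  exists j; rewrite (neq_negb ne) in Hj.
  apply: (@factL F hF _ (y' ++ [:: ~~ c])).
  by rewrite -cats1 /= -!catA.
exact: (gen y 0).
Qed.

Lemma hl_bound c w : w != [::] -> w != [:: ~~ c] ->
  (head c w == ~~ c) + (last c w == ~~ c) <= count_mem (~~ c) w.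
Proof.
case: w => [//|a w1] _ ne /=.
case: w1 ne => [|b w2] ne /=.
  case: (eqVneq a (~~ c)) ne => [->|na]; first by rewrite eqxx.
  by rewrite ?(negbTE na).
rewrite leq_add2l.
case: (eqVneq (last b w2) (~~ c)) => [E|]; last by [].
have := mem_last b w2; rewrite E -has_pred1 has_count.
by [].
Qed.

Section Ends.
Variable F : seq bool -> Prop.
Hypothesis hF : langC F.
Variable c : bool.
Hypothesis nc : ~ F [:: ~~ c; ~~ c].

Lemma step_head w : F w -> w != [::] -> exists w2, F w2 /\ (Gen gT F w2 -> Gen gT F w) /\
  head c w2 = c /\ last c w2 = last c w /\ count_mem (~~ c) w2 = count_mem (~~ c) w /\
  size w2 = size w + (head c w == ~~ c) /\ w2 != [::].
Proof.
case: w => [//|a w1] Fw _.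
case: (eqVneq a (~~ c)) => [ea|na].
  exists (c :: a :: w1); split; [|split; [|split; [|split; [|split; [|split]]]]]; rewrite //.
  - by rewrite ea; have := preceded hF nc (u:=w1); apply; rewrite -ea.
  - exact: Gen_cons hF.
  - by rewrite /= negc_count.
  - by rewrite /= addn1.
exists (a :: w1); split; [|split; [|split; [|split; [|split; [|split]]]]]; rewrite //.
- by rewrite /=; have := neq_negb na; case: a c {Fw na} => [] [].
- by rewrite addn0.
Qed.

Lemma step_last w : F w -> w != [::] -> head c w = c -> exists w3, F w3 /\
  (Gen gT F w3 -> Gen gT F w) /\ head c w3 = c /\ last c w3 = c /\
  count_mem (~~ c) w3 = count_mem (~~ c) w /\ size w3 = size w + (last c w == ~~ c).
Proof.
move=> Fw wn hw.
case: (eqVneq (last c w) (~~ c)) => [el|nl].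
  exists (rcons w c); split; [|split; [|split; [|split; [|split]]]].
  - case/lastP: w Fw wn hw el => [//|p x] Fw _ _; rewrite last_rcons => ex.
    by rewrite ex in Fw *; have := followed hF nc Fw.
  - exact: Gen_rcons hF.
  - by case: w Fw wn hw {el}.
  - by rewrite last_rcons.
  - by rewrite -cats1 count_cat /= negc_count; lia.
  - by rewrite size_rcons addn1.
exists w; split; [|split; [|split; [|split; [|split]]]]; rewrite //.
- by have := neq_negb nl; case: (last c w) c {nl hw} => [] [].
- by rewrite addn0.
Qed.

Lemma step_parse w : F w -> w != [::] -> head c w = c -> last c w = c ->
  exists u, w = tau c u ++ [:: c].
Proof.
case/lastP: w => [//|p x] Fw _ hw; rewrite last_rcons => ex; subst x.
case: p Fw hw => [|b p] Fw hw; first by exists [::].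
rewrite /= in hw; subst b.
have [u Hu] := tparse hF nc (F_rcons hF Fw).
by exists u; rewrite -Hu cats1.
Qed.

End Ends.

Theorem Gen_all n : forall F w, langC F -> size w <= n -> F w -> Gen gT F w.
Proof.
elim: n => [|n IH] F w hF sw Fw.
  by move: sw; rewrite leqn0 => /nilP ->; apply: Gen_nil.
case: (eqVneq w [::]) => [->|wn]; first exact: Gen_nil.
have [c [Hcc nc]] := sq hF.
case: (eqVneq w [:: ~~ c]) => [ew|wn'].
  have Fc : F [:: ~~ c] by rewrite -ew.
  have [k Hk] := iso_k hF Fc.
  by rewrite ew; exact: (@Gen_iso k F c hF nc Hk).
have [w2 [F2 [G2 [h2 [l2 [c2 [s2 n2]]]]]]] := step_head hF nc Fw wn.
have [w3 [F3 [G3 [h3 [l3 [c3 s3]]]]]] := step_last hF nc F2 n2 h2.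
have n3 : w3 != [::] by rewrite -size_eq0 s3 addn_eq0 negb_and; move: n2; rewrite -size_eq0 => ->.
have [u Eu] := step_parse hF nc F3 n3 h3 l3.
have hb := hl_bound wn wn'.
have su : size u + 1 <= size w.
  have : size w3 = size u + count_mem (~~ c) u + 1 by rewrite Eu size_cat size_tau /=; lia.
  have : count_mem (~~ c) w3 = count_mem (~~ c) u.
    by rewrite Eu count_cat count_tau /= negc_count; lia.
  rewrite c3 c2 s3 s2 l2; lia.
apply: G2; apply: G3; rewrite Eu; apply: Gen_tau.
apply: (IH _ _ (langC_desub hF nc)); first by lia.
by rewrite /desub -Eu.
Qed.

End GenAll.

Section RingPartP5.
Import GRing.Theory.
Local Open Scope ring_scope.

Fixpoint word (s : int -> bool) (k : int) (n : nat) : seq bool :=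
  if n is n'.+1 then s k :: word s (k + 1) n' else [::].

Section Seq.
Variable s : int -> bool.

Lemma size_word k n : size (word s k n) = n.
Proof. by elim: n k => //= n IH k; rewrite IH. Qed.

Lemma nth_word k n i : (i < n)%N -> nth false (word s k n) i = s (k + i%:Z).
Proof.
elim: n k i => [//|n IH] k [|i] /= hi; first by rewrite addr0.
by rewrite IH //; congr s; lia.
Qed.

Lemma word_add k a b : word s k (a + b) = word s k a ++ word s (k + a%:Z) b.
Proof.
elim: a k => [|a IH] k /=; first by rewrite addr0.
by rewrite IH; congr (_ :: _ ++ _); congr word; lia.
Qed.

Lemma word_eq k w : (word s k (size w) = w) <-> (forall i, (i < size w)%N -> nth false w i = s (k + i%:Z)).
Proof.
split=> [E i hi|H]; first by rewrite -{1}E nth_word.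
apply: (@eq_from_nth _ false); first by rewrite size_word.
by move=> i; rewrite size_word => hi; rewrite nth_word // H.
Qed.

Lemma isf_word w : is_factor s w <-> exists k, word s k (size w) = w.
Proof.
split=> [[k Hk]|[k Hk]]; exists k; first by apply/word_eq.
by apply/word_eq.
Qed.

Definition Fs w := exists k, word s k (size w) = w.

Lemma Fs_fact u v : Fs (u ++ v) -> Fs u /\ Fs v.
Proof.
case=> k; rewrite size_cat word_add => /eqP; rewrite eqseq_cat ?size_word //.
by case/andP => /eqP E1 /eqP E2; split; [exists k|exists (k + (size u)%:Z)].
Qed.

Lemma Fs_extr u : Fs u -> exists a, Fs (rcons u a).
Proof.
case=> k Hk; exists (s (k + (size u)%:Z)); exists k.
by rewrite size_rcons -addn1 word_add Hk /= cats1.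
Qed.

Lemma Fs_extl u : Fs u -> exists a, Fs (a :: u).
Proof.
case=> k Hk; exists (s (k - 1)); exists (k - 1) => /=.
by rewrite subrK Hk.
Qed.

Lemma count_RS n ws ws' :
  (forall u a, Fs (rcons u a) -> Fs u) ->
  uniq ws -> size ws = n.+1 -> all (fun w => size w == n) ws ->
  (forall w, size w = n -> (Fs w <-> w \in ws)) ->
  uniq ws' -> size ws' = n.+2 -> all (fun w => size w == n.+1) ws' ->
  (forall w, size w = n.+1 -> (Fs w <-> w \in ws')) ->
  count (fun u => (rcons u false \in ws') && (rcons u true \in ws')) ws = 1%N.
Proof.
move=> Frc u1 s1 a1 i1 u2 s2 a2 i2.
pose p0 := fun u => rcons u false \in ws'.
pose p1 := fun u => rcons u true \in ws'.
have E : size ws' = (count p0 ws + count p1 ws)%N.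
  have P : perm_eq ws' (map (rcons^~ false) (filter p0 ws) ++ map (rcons^~ true) (filter p1 ws)).
    apply: uniq_perm => //.
      rewrite cat_uniq !(map_inj_uniq (@rcons_injl _ _)) !filter_uniq //= andbT.
      apply/hasPn => _ /mapP [u _ ->]; apply/negP => /mapP [v _] /rcons_inj.
      by case.
    move=> w; apply/idP/idP => [win|].
      have sw : size w = n.+1 by move/allP: a2 => /(_ w win) /eqP.
      case/lastP: w win sw => [//|u a] win; rewrite size_rcons => -[su].
      have Fu : Fs u by apply: (Frc u a); apply/(i2 (rcons u a)); rewrite ?size_rcons ?su.
      have uin : u \in ws by apply/(i1 u su).
      rewrite mem_cat; case: a win => win; apply/orP; [right|left];
        apply: map_f; rewrite mem_filter ?uin /p0 /p1 ?win //.
    rewrite mem_cat => /orP [] /mapP [u]; rewrite mem_filter => /andP [pu _] ->; done.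
  by rewrite (perm_size P) size_cat !size_map !size_filter.
have U : count (predU p0 p1) ws = n.+1.
  rewrite -s1; apply/eqP; rewrite -all_count; apply/allP => u uin.
  have su : size u = n by move/allP: a1 => /(_ u uin) /eqP.
  have [a Fa] := Fs_extr ((i1 u su).2 uin).
  have : rcons u a \in ws' by apply/(i2 _ _).1; rewrite ?size_rcons ?su.
  by rewrite /= /p0 /p1; case: a {Fa} => ->; rewrite ?orbT.
have := count_predUI p0 p1 ws; rewrite U -E s2 => H.
change (count (predI p0 p1) ws = 1%N); lia.
Qed.

End Seq.

End RingPartP5.

Section RingPartP6.
Import GRing.Theory.
Local Open Scope ring_scope.

Lemma fin_bound1 n (Q : nat -> nat -> Prop) :
  (forall a, (a < n)%N -> exists i, Q a i) ->
  exists M, forall a, (a < n)%N -> exists i, (i < M)%N /\ Q a i.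
Proof.
elim: n => [|n IH] H; first by exists 0%N.
have [M HM] := IH (fun a ha => H a (ltnW ha)).
have [i0 Hi0] := H n (ltnSn n).
exists (maxn M i0.+1) => a; rewrite ltnS leq_eqVlt => /orP [/eqP ->|ha].
  by exists i0; split => //; lia.
by have [i [hi Qi]] := HM a ha; exists i; split => //; lia.
Qed.

Lemma fin_bound2 B (P : nat -> nat -> nat -> Prop) :
  (forall a b, (a < b)%N -> (b <= B)%N -> exists i, P a b i) ->
  exists M, forall a b, (a < b)%N -> (b <= B)%N -> exists i, (i < M)%N /\ P a b i.
Proof.
move=> H.
have H1 : forall a, (a < B.+1)%N -> exists M, forall b, (b < B.+1)%N ->
    exists i, (i < M)%N /\ ((a < b)%N -> P a b i).
  move=> a _; apply: (fin_bound1 (Q := fun b i => (a < b)%N -> P a b i)) => b hb.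
  case: (ltnP a b) => ab.
    by have [i Hi] := H a b ab hb; exists i.
  by exists 0%N => ?; lia.
have [M HM] := fin_bound1 H1.
exists M => a b ab bB.
have [Ma [hMa HMa]] := HM a (ltac:(lia)).
have [i [hi Pi]] := HMa b (ltac:(lia)).
by exists i; split; [lia|exact: Pi].
Qed.

Section Sturm.
Variable s : int -> bool.
Hypothesis hst : sturmian s.

Lemma ws_of n : exists ws, [/\ uniq ws, size ws = n.+1, all (fun w => size w == n) ws &
   forall w, size w = n -> (Fs s w <-> w \in ws)].
Proof.
have [ws [u1 s1 a1 i1]] := hst.2 n.
exists ws; split => // w sw; have := i1 w sw; have := isf_word s w; rewrite /Fs; tauto.
Qed.

Lemma Fs_rc u a : Fs s (rcons u a) -> Fs s u.
Proof. by rewrite -cats1 => /Fs_fact []. Qed.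

Lemma qdef n u (ws' : seq (seq bool)) : size u = n ->
  (forall w, size w = n.+1 -> (Fs s w <-> w \in ws')) ->
  (RS (Fs s) u <-> (rcons u false \in ws') && (rcons u true \in ws')).
Proof.
move=> su i2; rewrite /RS.
have h a : Fs s (rcons u a) <-> rcons u a \in ws' by apply: i2; rewrite size_rcons su.
have h0 := h false; have h1 := h true.
split => [[H0 H1]|/andP [H0 H1]].
  by apply/andP; split; [apply/h0|apply/h1].
by split; [apply/h0|apply/h1].
Qed.

Lemma Fs_rsuniq u v : RS (Fs s) u -> RS (Fs s) v -> size u = size v -> u = v.
Proof.
move=> Hu Hv suv.
have [ws [u1 s1 a1 i1]] := ws_of (size u).
have [ws' [u2 s2 a2 i2]] := ws_of (size u).+1.
have C := count_RS (@Fs_rc) u1 s1 a1 i1 u2 s2 a2 i2.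
have qu := (qdef erefl i2).1 Hu.
have qv := (qdef (esym suv) i2).1 Hv.
have uin : u \in ws by apply/(i1 u erefl); case: Hu => /Fs_rc.
have vin : v \in ws by apply/(i1 v (esym suv)); case: Hv => /Fs_rc.
case: (eqVneq u v) => // ne; exfalso.
have : (2 <= count (fun u => (rcons u false \in ws') && (rcons u true \in ws')) ws)%N.
  rewrite -size_filter.
  apply: (uniq_leq_size (s1 := [:: u; v])); first by rewrite /= inE ne.
  by move=> x; rewrite !inE => /orP [] /eqP ->; rewrite mem_filter ?qu ?qv ?uin ?vin.
by rewrite C.
Qed.

Lemma Fs_rsex n : exists u, size u = n /\ RS (Fs s) u.
Proof.
have [ws [u1 s1 a1 i1]] := ws_of n.
have [ws' [u2 s2 a2 i2]] := ws_of n.+1.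
have C := count_RS (@Fs_rc) u1 s1 a1 i1 u2 s2 a2 i2.
have : has (fun u => (rcons u false \in ws') && (rcons u true \in ws')) ws.
  by rewrite has_count C.
case/hasP => u uin qu.
have su : size u = n by move/allP: a1 => /(_ u uin) /eqP.
by exists u; split => //; apply/(qdef su i2).
Qed.

Lemma Fs_rec u : Fs s u -> exists x, x <> [::] /\ Fs s (x ++ u) /\ exists t, x ++ u = u ++ t.
Proof.
case=> k Hk.
suff [t [t0 Ht]] : exists t : nat, (0 < t)%N /\ word s (k + t%:Z) (size u) = u.
  exists (word s k t); split; first by case: t t0 {Ht}.
  split; first by exists k; rewrite size_cat size_word word_add Ht.
  exists (word s (k + (size u)%:Z) t).
  by rewrite -{1}Ht -word_add addnC word_add Hk.
apply: NNPP => noocc.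
have noocc' : forall t : nat, (0 < t)%N -> word s (k + t%:Z) (size u) != u.
  by move=> t t0; apply/eqP => E; apply: noocc; exists t.
set B := size u in Hk noocc'.
have shift : forall (x y : int) (m r : nat), word s x m = word s y m ->
    (r + B <= m)%N -> x + r%:Z = k -> word s (y + r%:Z) B = u.
  move=> x y m r E rB xr; apply/word_eq => i hi.
  rewrite -Hk nth_word; last by rewrite /B in hi *.
  have := congr1 (fun w => nth false w (r + i)) E; rewrite /= !nth_word; try lia.
  move=> E'; rewrite -xr.
  have -> : x + r%:Z + i%:Z = x + (r + i)%:Z by lia.
  by rewrite E'; congr s; lia.
have window : forall m, (B <= m)%N -> exists a b, [/\ (a < b)%N, (b <= B)%N &
    forall i, (i < m)%N -> s (k + (1 + a + i)%:Z) = s (k + (1 + b + i)%:Z)].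
  move=> m Bm.
  have [ws [u1 s1 a1 i1]] := ws_of m.
  pose LT := [seq word s (k - r%:Z) m | r <- iota 0 (m - B).+1].
  pose LJ := [seq word s (k + (1 + a)%:Z) m | a <- iota 0 B.+1].
  have inws : forall x, x \in LT ++ LJ -> x \in ws.
    move=> x; rewrite mem_cat => /orP [] /mapP [r _ ->];
      by apply/(i1 _ (size_word _ _ _)); eexists; rewrite size_word.
  have uLT : uniq LT.
    rewrite map_inj_in_uniq ?iota_uniq // => r1 r2; rewrite !mem_iota !add0n => h1 h2 E.
    have W : forall r1 r2, (r1 < (m - B).+1)%N -> (r2 < (m - B).+1)%N ->
        word s (k - r1%:Z) m = word s (k - r2%:Z) m -> (r1 <= r2)%N -> r1 = r2.
      move=> q1 q2 g1 g2 Eq le; apply/eqP; rewrite eqn_leq le /= leqNgt.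
      apply/negP => lt.
      have occ := shift (k - q2%:Z) (k - q1%:Z) m q2 (esym Eq) (ltac:(lia)) (ltac:(lia)).
      have := noocc' (q2 - q1)%N (ltac:(lia)).
      have -> : k + (q2 - q1)%N%:Z = k - q1%:Z + q2%:Z by lia.
      by rewrite occ eqxx.
    case: (leqP r1 r2) => le; first exact: W.
    by apply/esym; apply: W h2 h1 (esym E) (ltnW le).
  have dis : ~~ has (mem LT) LJ.
    apply/hasPn => _ /mapP [a ha ->]; apply/negP => /mapP [r hr E].
    move: ha hr; rewrite !mem_iota => /andP [_ ha] /andP [_ hr].
    have occ := shift (k - r%:Z) (k + (1 + a)%:Z) m r (esym E) (ltac:(lia)) (ltac:(lia)).
    have := noocc' (1 + a + r)%N (ltac:(lia)).
    have -> : k + (1 + a + r)%N%:Z = k + (1 + a)%:Z + r%:Z by lia.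
    by rewrite occ eqxx.
  have nuLJ : ~~ uniq LJ.
    apply/negP => uLJ.
    have : uniq (LT ++ LJ) by rewrite cat_uniq uLT dis uLJ.
    move/uniq_leq_size => /(_ ws inws).
    rewrite size_cat !size_map !size_iota s1; lia.
  case/(uniqPn [::]): nuLJ => i [j [ij jsz E]].
  rewrite size_map size_iota in jsz.
  rewrite !(nth_map 0%N) ?size_iota ?nth_iota in E; try lia.
  exists i, j; split; [lia|lia|] => i' hi'.
  have := congr1 (fun w => nth false w i') E; rewrite /= !nth_word //.
  move=> E'; have -> : k + (1 + i + i')%:Z = k + (1 + (0 + i))%:Z + i'%:Z by lia.
  by rewrite E'; congr s; lia.
have fail : forall a b, (a < b)%N -> (b <= B)%N ->
    exists i, s (k + (1 + a + i)%:Z) != s (k + (1 + b + i)%:Z).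
  move=> a b ab bB; apply: NNPP => H; apply: hst.1.
  exists (b - a)%N, (k + (1 + a)%:Z); split; first lia.
  left => n hn.
  have [i ->] : exists i : nat, n = k + (1 + a)%:Z + i%:Z.
    by exists (absz (n - (k + (1 + a)%:Z))%R); lia.
  case: (eqVneq (s (k + (1 + a)%:Z + i%:Z + (b - a)%N%:Z)) (s (k + (1 + a)%:Z + i%:Z))) => // ne.
  exfalso; apply: H; exists i.
  have -> : k + (1 + a + i)%:Z = k + (1 + a)%:Z + i%:Z by lia.
  have -> : k + (1 + b + i)%:Z = k + (1 + a)%:Z + i%:Z + (b - a)%N%:Z by lia.
  by rewrite eq_sym.
have [M HM] := fin_bound2 fail.
have [a [b [ab bB Hw]]] := window (maxn M B) (leq_maxr _ _).
have [i [iM Pi]] := HM a b ab bB.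
by rewrite Hw ?eqxx in Pi; lia.
Qed.

Lemma langC_Fs : langC (Fs s).
Proof.
split.
- exact: Fs_fact.
- exact: Fs_extr.
- exact: Fs_extl.
- exact: Fs_rsuniq.
- exact: Fs_rsex.
- exact: Fs_rec.
Qed.

End Sturm.

End RingPartP6.

Definition pb (P : Prop) : bool := if excluded_middle_informative P then true else false.
Lemma pbP (P : Prop) : reflect P (pb P).
Proof. by rewrite /pb; case: excluded_middle_informative => h; constructor. Qed.

Lemma exists_min (P : seq bool -> Prop) (g : seq bool -> nat) :
  (exists w, P w) -> exists w0, P w0 /\ forall w, P w -> g w0 <= g w.
Proof.
case=> w Pw.
suff H : forall n w, P w -> g w <= n -> exists w0, P w0 /\ forall w, P w -> g w0 <= g w.
  exact: H Pw (leqnn _).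
elim=> [|n IH] w1 Pw1 le.
  by exists w1; split => // w' _; move: le; rewrite leqn0 => /eqP ->.
have [[w' [Pw' lt]]|nex] := classic (exists w', P w' /\ g w' < g w1).
  by apply: (IH w') => //; lia.
exists w1; split => // w' Pw'; rewrite leqNgt; apply/negP => lt; apply: nex.
by exists w'.
Qed.

Unset Implicit Arguments.
Set Strict Implicit.
Theorem lemma5p7 (d : nat) (h v : {perm 'I_d}) (M : nat)
  (htrans : [transitive <<[set h; v]>>, on [set: 'I_d] | 'P])
  (sigma : int -> bool) (hst : sturmian sigma)
  (mu : int -> 'I_d)
  (hmu : forall n : int, mu (n + 1)%R = sact h v M (sigma n) (mu n)) :
  forall (l : 'I_d) (s : bool), exists n : int, mu n = l /\ sigma n = s.
Proof.
pose F := Fs sigma.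
have hF : langC F := langC_Fs hst.
pose fL : {perm 'I_d} := (h ^+ M * v)%g.
pose fR : {perm 'I_d} := (h ^+ M.+1 * v)%g.
have hmu' : forall n, mu (n + 1)%R = (if sigma n then fR else fL) (mu n).
  by move=> n; rewrite hmu /sact /fR /fL; case: (sigma n); rewrite permM.
have muword : forall x k, word sigma k (size x) = x ->
    mu (k + (size x)%:Z)%R = ev fL fR x (mu k).
  elim=> [|a x IH] k /=; first by rewrite GRing.addr0 perm1.
  case=> Ea Ex; rewrite permM -Ea -hmu' -IH //.
  by congr mu; lia.
pose S w := [set l : 'I_d | pb (exists k, word sigma k (size w) = w /\ mu k = l)].
have SP : forall w l, reflect (exists k, word sigma k (size w) = w /\ mu k = l) (l \in S w).
  by move=> w l; rewrite inE; apply: pbP.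
have [w0 [Fw0 minw]] := exists_min (fun w => #|S w|) (ex_intro F [::] (@factL F hF [::] [:: false] (F_letter hF false))).
set S0 := S w0.
pose N := ('N(S0 | 'P))%G.
have Dsub : forall x, Dw F w0 x -> ev fL fR x \in N.
  move=> x [xn [Fx [t Et]]].
  set g := ev fL fR x.
  have sub1 : S (x ++ w0) \subset S0.
    apply/subsetP => l /SP [k [Ek Ml]]; apply/SP; exists k; split => //.
    move: Ek; rewrite Et size_cat word_add => /eqP; rewrite eqseq_cat ?size_word //.
    by case/andP => /eqP.
  have eqS : S (x ++ w0) = S0.
    apply/eqP; rewrite eqEcard sub1 /=; exact: minw.
  have img : forall l, l \in S0 -> g l \in S0.
    move=> l; rewrite -{1}eqS => /SP [k [Ek Ml]]; apply/SP.
    exists (k + (size x)%:Z)%R; split.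
      move: Ek; rewrite size_cat word_add => /eqP; rewrite eqseq_cat ?size_word //.
      by case/andP => _ /eqP.
    move: Ek; rewrite size_cat word_add => /eqP; rewrite eqseq_cat ?size_word //.
    by case/andP => /eqP /muword -> _; rewrite Ml.
  have imS : g @: S0 = S0.
    apply/eqP; rewrite eqEcard card_imset; last exact: perm_inj.
    rewrite leqnn andbT; apply/subsetP => _ /imsetP [l lS ->]; exact: img.
  apply/astabsP => l /=.
  apply/idP/idP; last exact: img.
  by rewrite -{1}imS => /imsetP [l' l'S /perm_inj ->].
have [hL hR] := @Gen_all _ (size w0) F w0 hF (leqnn _) Fw0 fL fR N Dsub.
have hN : h \in N.
  have eR : fR = (h * fL)%g by rewrite /fR /fL expgS mulgA.
  have -> : h = (fR * fL^-1)%g by rewrite eR mulgK.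
  by rewrite groupM ?groupV.
have vN : v \in N.
  have -> : v = ((h ^+ M)^-1 * fL)%g by rewrite /fL mulKg.
  by rewrite groupM ?groupV ?groupX.
have genN : (<<[set h; v]>> \subset N)%g.
  rewrite gen_subG; apply/subsetP => g /set2P [] ->; [exact: hN|exact: vN].
have [k0 Ek0] := Fw0.
have S0T : forall l, l \in S0.
  move=> l.
  have l0S : mu k0 \in S0 by apply/SP; exists k0.
  have [a aG ->] := atransP2 htrans (in_setT (mu k0)) (in_setT l).
  have aN : a \in N by apply: (subsetP genN).
  by rewrite (astabs_act _ aN).
move=> l s.
have Fs1 : F [:: s] := F_letter hF s.
have : S [:: s] = [set: 'I_d].
  apply/eqP; rewrite eqEcard subsetT /=.
  have -> : #|[set: 'I_d]| = #|S0| by apply: eq_card => x; rewrite in_setT S0T.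
  exact: minw.
move/setP => /(_ l); rewrite in_setT => /SP [k [Ek Ml]].
by exists k; split => //; case: Ek.
Qed.
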